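(* Let $a_k\ge0$, $b_k>0$ $(k\ge0)$ be such that $\mathcal{A}(t)=\sum_{k=0}^\infty a_k(k+1)^{-t}$ and $\mathcal{B}(t)=\sum_{k=0}^\infty b_k(k+1)^{-t}$ converge on $(0,\infty)$. If $\{a_k/b_k\}$ is increasing (resp. decreasing) for all $k\ge0$, then $t\mapsto\mathcal{A}(t)/\mathcal{B}(t)$ is decreasing (resp. increasing) on $(0,\infty)$ and $t\mapsto\mathcal{A}(1-t)/\mathcal{B}(1-t)$ is increasing (resp. decreasing) on $(-\infty,1)$. *)

(* Defs.v *)
From Stdlib Require Import Reals.
From Coquelicot Require Import Coquelicot.
Open Scope R_scope.

Definition dterm (c : nat -> R) (t : R) (k : nat) : R :=
  c k * Rpower (INR k + 1) (- t).

Definition Dser (c : nat -> R) (t : R) : R := Series (dterm c t).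

(* Main.v *)
Require Import Defs.
From Stdlib Require Import Reals Lra Wf_nat Classical Arith.
From Coquelicot Require Import Coquelicot.
Open Scope R_scope.

Lemma lin_series (u v : nat -> R) (U V c : R) :
  is_series u U -> is_series v V -> is_series (fun k => u k - c * v k) (U - c * V).
Proof.
  intros Hu Hv. 
  pose proof (is_series_minus _ _ _ _ Hu (is_series_scal c _ _ Hv)) as H.
  exact H.
Qed.

Lemma Series_zero : Series (fun _ => 0) = 0.
Proof.
  rewrite (Series_ext (fun _ => 0) (fun _ => 0 * 0)) by (intros; ring).
  rewrite Series_scal_l. ring.
Qed.

Lemma core (ta tb sa sb : nat -> R) (lam fs sg : R) :
  ex_series ta -> ex_series tb -> ex_series sa -> ex_series sb ->
  Series sa - lam * Series sb = 0 ->
  (forall k, sg * ((ta k - lam * tb k) - fs * (sa k - lam * sb k)) <= 0) ->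
  sg * (Series ta - lam * Series tb) <= 0.
Proof.
  intros Ha Hb Hc Hd H0 Hk.
  apply Series_correct in Ha, Hb, Hc, Hd.
  pose proof (lin_series _ _ _ _ lam Ha Hb) as H1.
  pose proof (lin_series _ _ _ _ lam Hc Hd) as H2.
  pose proof (lin_series _ _ _ _ fs H1 H2) as H3.
  pose proof (is_series_scal (- sg) _ _ H3) as H4.
  set (g := fun k => - sg * (ta k - lam * tb k - fs * (sa k - lam * sb k))).
  assert (H5 : is_series g (- sg * (Series ta - lam * Series tb - fs * (Series sa - lam * Series sb)))).
  { eapply is_series_ext; [|exact H4]. intros n; reflexivity. }
  assert (Hle := Series_le (fun _ => 0) g).
  rewrite (is_series_unique _ _ H5) in Hle. rewrite Series_zero in Hle.
  rewrite H0 in Hle.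
  assert (0 <= - sg * (Series ta - lam * Series tb - fs * 0)).
  { apply Hle. intros n; split. lra. unfold g.
    specialize (Hk n). lra.
    eexists. exact H5. }
  lra.
Qed.

Lemma thresh (P : nat -> Prop) (f : nat -> R) :
  (forall k j, (k <= j)%nat -> P k -> P j) ->
  (forall k j, (k <= j)%nat -> f j <= f k) -> (forall k, 0 <= f k) ->
  exists fs, (forall k, P k -> f k <= fs) /\ (forall k, ~ P k -> fs <= f k).
Proof.
  intros HP Hf Hpos.
  destruct (classic (exists k, P k)) as [Hex|Hn].
  - destruct (dec_inh_nat_subset_has_unique_least_element P (fun n => classic (P n)) Hex)
      as [m [[Pm Hm] _]].
    exists (f m). split.
    + intros k Pk. apply Hf, Hm, Pk.
    + intros k nPk. destruct (le_lt_dec m k) as [l|l].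
      * exfalso. apply nPk, (HP m k l Pm).
      * apply Hf. apply Nat.lt_le_incl, l.
  - exists 0. split.
    + intros k Pk. exfalso. apply Hn. exists k; exact Pk.
    + intros k _. apply Hpos.
Qed.

Lemma mono_nat (d : nat -> R) : (forall k, d k <= d (S k)) ->
  forall k j, (k <= j)%nat -> d k <= d j.
Proof.
  intros H k j Hkj. induction Hkj. lra. specialize (H m). lra.
Qed.

Lemma exp_le' x y : x <= y -> exp x <= exp y.
Proof.
  intros H. destruct (Rle_lt_or_eq_dec x y H) as [h|h].
  left; apply exp_increasing, h. right; subst; reflexivity.
Qed.

Lemma Rpower_pos' x y : 0 < Rpower x y.
Proof. unfold Rpower. apply exp_pos. Qed.

Lemma Dser_pos b t : (forall k, 0 < b k) -> ex_series (dterm b t) -> 0 < Dser b t.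
Proof.
  intros hb He. unfold Dser. rewrite Series_incr_1 by exact He.
  assert (0 < dterm b t 0). { unfold dterm. apply Rmult_lt_0_compat; [apply hb|apply Rpower_pos']. }
  assert (0 <= Series (fun k => dterm b t (S k))).
  { rewrite <- Series_zero. apply Series_le.
    - intros n; split; [lra|]. unfold dterm. left. apply Rmult_lt_0_compat; [apply hb|apply Rpower_pos'].
    - apply (ex_series_incr_1 (dterm b t)), He. }
  lra.
Qed.

Lemma main (a b : nat -> R) (sg : R)
  (ha : forall k, 0 <= a k) (hb : forall k, 0 < b k)
  (hAc : forall t, 0 < t -> ex_series (dterm a t))
  (hBc : forall t, 0 < t -> ex_series (dterm b t)) :
  (forall k, sg * (a k / b k) <= sg * (a (S k) / b (S k))) ->
  forall s t, 0 < s -> s <= t ->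
  sg * (Dser a t / Dser b t) <= sg * (Dser a s / Dser b s).
Proof.
  intros Hc s t hs hst.
  assert (ht : 0 < t) by lra.
  pose proof (Dser_pos b s hb (hBc s hs)) as Bs.
  pose proof (Dser_pos b t hb (hBc t ht)) as Bt.
  set (lam := Dser a s / Dser b s).
  set (c := fun k => a k / b k).
  set (f := fun k : nat => Rpower (INR k + 1) (s - t)).
  assert (Hcm := mono_nat (fun k => sg * c k) Hc).
  destruct (thresh (fun k => 0 < sg * (c k - lam)) f) as [fs [H1 H2]].
  - intros k j hkj hk. specialize (Hcm k j hkj). simpl in Hcm. lra.
  - intros k j hkj. unfold f, Rpower. apply exp_le'.
    assert (INR k <= INR j) by (apply le_INR, hkj).
    assert (ln (INR k + 1) <= ln (INR j + 1)).
    { apply ln_le. pose proof (pos_INR k). lra. lra. }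
    nra.
  - intros k. left. apply Rpower_pos'.
  - assert (Hcore := core (dterm a t) (dterm b t) (dterm a s) (dterm b s) lam fs sg
       (hAc t ht) (hBc t ht) (hAc s hs) (hBc s hs)).
    fold (Dser a t) (Dser b t) (Dser a s) (Dser b s) in Hcore.
    assert (Hz : Dser a s - lam * Dser b s = 0) by (unfold lam; field; lra).
    specialize (Hcore Hz).
    assert (Hk : forall k, sg * ((dterm a t k - lam * dterm b t k) - fs * (dterm a s k - lam * dterm b s k)) <= 0).
    { intros k. unfold dterm.
      assert (HX : Rpower (INR k + 1) (- t) = Rpower (INR k + 1) (- s) * f k).
      { unfold f. rewrite <- Rpower_plus. f_equal. ring. }
      rewrite HX.
      assert (hbk := hb k).
      assert (Xs := Rpower_pos' (INR k + 1) (- s)).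
      set (Y := Rpower (INR k + 1) (- s)) in *.
      replace (sg * (a k * (Y * f k) - lam * (b k * (Y * f k)) - fs * (a k * Y - lam * (b k * Y))))
        with ((b k * Y) * ((sg * (c k - lam)) * (f k - fs))) by (unfold c; field; lra).
      assert (0 < b k * Y) by (apply Rmult_lt_0_compat; lra).
      assert ((sg * (c k - lam)) * (f k - fs) <= 0).
      { destruct (classic (0 < sg * (c k - lam))) as [p|p].
        - specialize (H1 k p). nra.
        - specialize (H2 k p). nra. }
      nra. }
    specialize (Hcore Hk).
    assert (E : sg * (Dser a t / Dser b t) - sg * lam = sg * (Dser a t - lam * Dser b t) / Dser b t)
      by (field; lra).
    assert (sg * (Dser a t - lam * Dser b t) / Dser b t <= 0).
    { unfold Rdiv. assert (0 < / Dser b t) by (apply Rinv_0_lt_compat; lra). nra. }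
    lra.
Qed.

Theorem corollary9 (a b : nat -> R)
  (ha : forall k, 0 <= a k) (hb : forall k, 0 < b k)
  (hAc : forall t, 0 < t -> ex_series (dterm a t))
  (hBc : forall t, 0 < t -> ex_series (dterm b t)) :
  ((forall k, a k / b k <= a (S k) / b (S k)) ->
     (forall s t, 0 < s -> s <= t ->
        Dser a t / Dser b t <= Dser a s / Dser b s) /\
     (forall s t, s <= t -> t < 1 ->
        Dser a (1 - s) / Dser b (1 - s) <= Dser a (1 - t) / Dser b (1 - t)))
  /\
  ((forall k, a (S k) / b (S k) <= a k / b k) ->
     (forall s t, 0 < s -> s <= t ->
        Dser a s / Dser b s <= Dser a t / Dser b t) /\
     (forall s t, s <= t -> t < 1 ->
        Dser a (1 - t) / Dser b (1 - t) <= Dser a (1 - s) / Dser b (1 - s))).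
Proof.
  split; intros Hm.
  - assert (M := main a b 1 ha hb hAc hBc).
    assert (H : forall k, 1 * (a k / b k) <= 1 * (a (S k) / b (S k))) by (intros k; specialize (Hm k); lra).
    specialize (M H). split.
    + intros s t hs hst. specialize (M s t hs hst). lra.
    + intros s t hst ht. specialize (M (1 - t) (1 - s) ltac:(lra) ltac:(lra)). lra.
  - assert (M := main a b (-1) ha hb hAc hBc).
    assert (H : forall k, -1 * (a k / b k) <= -1 * (a (S k) / b (S k))) by (intros k; specialize (Hm k); lra).
    specialize (M H). split.
    + intros s t hs hst. specialize (M s t hs hst). lra.
    + intros s t hst ht. specialize (M (1 - t) (1 - s) ltac:(lra) ltac:(lra)). lra.
Qed.
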